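(* Let $k\in\mathbb{N}^\ast$ and let $T_k$ be a random variable with Gamma distribution of shape $k$ and rate $1$. Let $\beta>0$, $K_0>0$ and let $Y$ be a non-negative random variable with $\mathbb{E}[e^{\beta T_k}Y]\le K_0$. Then for every $c_0>1$ and $c_1\in(0,1)$, with probability at least $1-\frac{1}{c_0}-e^{-(c_1-1-\log(c_1))k}$, $$Y\le c_0K_0e^{-\beta c_1k}.$$ *)

(* Defs.v *)
From HB Require Import structures.
From mathcomp Require Import all_boot all_order all_algebra.
From mathcomp Require Import all_classical all_reals all_analysis.
Set Implicit Arguments. Unset Strict Implicit. Unset Printing Implicit Defensive.
Import Order.TTheory GRing.Theory Num.Theory.
Import numFieldNormedType.Exports.
Local Open Scope classical_set_scope.
Local Open Scope ring_scope.

Definition gamma_pdf {R : realType} (k : nat) (x : R) : R :=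
  if 0 <= x then x ^+ k.-1 * expR (- x) / (k.-1)`!%:R else 0.

Definition gamma_distributed {R : realType} d (T : measurableType d)
  (P : probability T R) (k : nat) (X : {RV P >-> R}) : Prop :=
  forall A : set R, measurable A ->
    distribution P X A = (\int[lebesgue_measure]_(x in A) (gamma_pdf k x)%:E)%E.
Arguments gamma_distributed {R d T} P k X.

(* Main.v *)
Require Import Defs.
From HB Require Import structures.
From mathcomp Require Import all_boot all_order all_algebra.
From mathcomp Require Import all_classical all_reals all_analysis.
From mathcomp Require Import measurable_realfun ring lra.
Import Order.TTheory GRing.Theory Num.Theory.
Import numFieldNormedType.Exports.
Local Open Scope classical_set_scope.
Local Open Scope ring_scope.

Definition gpdf {R : realType} (k : nat) (x : R) : R :=
  x ^+ k.-1 * expR (- x) / (k.-1)`!%:R.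

Lemma gpdf_cont {R : realType} k : continuous (@gpdf R k).
Proof.
move=> x.
apply: (@continuousM _ R^o (fun x : R => x ^+ k.-1 * expR (- x)) (fun=> (k.-1)`!%:R^-1)); last exact: cst_continuous.
apply: (@continuousM _ R^o (fun x : R => x ^+ k.-1) (fun x => expR (- x))); first exact: exprn_continuous.
apply: continuous_comp; last exact: continuous_expR.
exact: (@continuousN _ R^o).
Qed.

Lemma gpdf_ge0 {R : realType} k (x : R) : 0 <= x -> 0 <= gpdf k x.
Proof.
move=> x0; rewrite /gpdf; apply: mulr_ge0; last by rewrite invr_ge0.
by apply: mulr_ge0; [exact: exprn_ge0|exact: expR_ge0].
Qed.

Lemma gpdf_subst {R : realType} k (c : R) : 0 < c ->
  (\int[lebesgue_measure]_(x in `[0%R, +oo[) (gpdf k x)%:E =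
   \int[lebesgue_measure]_(x in `[0%R, +oo[) (gpdf k (c * x) * c)%:E)%E.
Proof.
move=> c0.
pose F := fun x : R => c * x.
have dF : forall x, derivable F x 1.
  by move=> x; apply: derivableM => //; exact: derivable_id.
have F' : forall x, F^`()%classic x = c.
  by move=> x; rewrite /F derive1Ml ?derive1_id ?mulr1//; exact: derivable_id.
have F0 : F 0 = 0 by rewrite /F mulr0.
have := @increasing_ge0_integration_by_substitutiony R F (gpdf k) 0.
rewrite F0 => ->.
- by apply: eq_integral => x _; rewrite /= !fctE F'.
- by move=> x y _ _ xy; rewrite /F ltr_pM2l.
- by move=> x _; rewrite (_ : F^`()%classic = cst c); [exact: cst_continuous|apply/funext => y; rewrite F'].
- by rewrite (_ : F^`()%classic = cst c); [apply: is_cvg_cst|apply/funext => y; rewrite F'].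
- by rewrite (_ : F^`()%classic = cst c); [apply: is_cvg_cst|apply/funext => y; rewrite F'].
- split; first by move=> x _; exact: dF.
  apply: cvg_at_right_filter; apply: continuousM => //; exact: cst_continuous.
- by apply: gt0_cvgMry => //; exact: cvg_id.
- by apply: continuous_subspaceT; exact: gpdf_cont.
- by move=> x; rewrite in_itv /= andbT => /ltW; exact: gpdf_ge0.
Qed.

Lemma gamma_pdfE {R : realType} k (x : R) :
  gamma_pdf k x = (gpdf k \_ `[0%R, +oo[) x.
Proof.
rewrite patchE /gamma_pdf; case: ifPn => x0.
  by rewrite ifT // inE /= in_itv /= x0.
rewrite ifF //; apply/negbTE; rewrite notin_setE /= in_itv /= andbT; exact/negP.
Qed.

Lemma measurable_gamma_pdf {R : realType} k :
  measurable_fun [set: R] (gamma_pdf k).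
Proof.
rewrite (_ : gamma_pdf k = gpdf k \_ `[0%R, +oo[); last first.
  by apply/funext => x; exact: gamma_pdfE.
apply/measurable_restrict => //; apply: measurable_funTS.
exact: measurable_realfun.continuous_measurable_fun (gpdf_cont k).
Qed.

Lemma gamma_pdf_ge0 {R : realType} k (x : R) : 0 <= gamma_pdf k x.
Proof. by rewrite /gamma_pdf; case: ifPn => // x0; have := gpdf_ge0 k x x0; rewrite /gpdf. Qed.

Lemma integral_gamma_pdf {R : realType} k (h : R -> R) :
  (\int[lebesgue_measure]_x (h x * gamma_pdf k x)%:E =
   \int[lebesgue_measure]_(x in `[0%R, +oo[) (h x * gpdf k x)%:E)%E.
Proof.
rewrite [RHS]integral_mkcond; apply: eq_integral => x _.
rewrite gamma_pdfE !patchE; case: ifPn => //; by rewrite mulr0.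
Qed.

Lemma gamma_norm {R : realType} {d} {T : measurableType d} (P : probability T R) k
  (X : {RV P >-> R}) : gamma_distributed P k X ->
  (\int[lebesgue_measure]_(x in `[0%R, +oo[) (@gpdf R k x)%:E = 1)%E.
Proof.
move=> H; have := H setT measurableT.
rewrite probability_setT => ->.
transitivity (\int[lebesgue_measure]_(x in `[0%R, +oo[) ((fun=> 1) x * @gpdf R k x)%:E)%E.
  by apply: eq_integral => x _; rewrite mul1r.
by rewrite -integral_gamma_pdf; apply: eq_integral => x _; rewrite mul1r.
Qed.

Lemma gamma_tail {R : realType} {d} {T : measurableType d} (P : probability T R) k
  (X : {RV P >-> R}) (c1 : R) : (0 < k)%N -> gamma_distributed P k X ->
  0 < c1 < 1 ->
  (P [set w | (X w < c1 * k%:R)%R] <= (expR (- (c1 - 1 - ln c1) * k%:R))%:E)%E.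
Proof.
move=> k0 H /andP[c10 c11].
set a := c1 * k%:R; set th := c1^-1 - 1.
set C := expR (- (c1 - 1 - ln c1) * k%:R).
have th0 : 0 <= th by rewrite subr_ge0 invf_ge1 // ltW.
have -> : [set w | X w < a] = X @^-1` `]-oo, a[.
  by apply/seteqP; split => w /=; rewrite in_itv /=.
have -> : P (X @^-1` `]-oo, a[) = distribution P X `]-oo, a[ by [].
rewrite H //.
pose h := fun x : R => expR (th * (a - x)).
have mh : measurable_fun [set: R] h.
  apply: measurable_realfun.continuous_measurable_fun => x.
  apply: continuous_comp; last exact: continuous_expR.
  apply: (@continuousM _ R^o (fun=> th) (fun x => a - x)); first exact: cst_continuous.
  apply: (@continuousB _ R^o R^o (fun=> a) id); [exact: cst_continuous | exact: cvg_id].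
have mhg : measurable_fun [set: R] (EFin \o (fun x => h x * gamma_pdf k x)).
  apply/measurable_EFinP; apply: measurable_funM => //; exact: measurable_gamma_pdf.
apply: (@le_trans _ _ (\int[lebesgue_measure]_(x in `]-oo, a[) (h x * gamma_pdf k x)%:E)%E).
  apply: ge0_le_integral => //.
  - by move=> x _; rewrite lee_fin gamma_pdf_ge0.
  - apply: measurable_funTS; apply/measurable_EFinP; exact: measurable_gamma_pdf.
  - apply: measurable_funTS; exact: mhg.
  - move=> x; rewrite /= in_itv /= => xa; rewrite lee_fin ler_peMl ?gamma_pdf_ge0 //.
    rewrite /h; apply: le_trans (expR_ge1Dx _); rewrite lerDl.
    by apply: mulr_ge0 => //; rewrite subr_ge0 ltW.
apply: (@le_trans _ _ (\int[lebesgue_measure]_x (h x * gamma_pdf k x)%:E)%E).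
  apply: ge0_subset_integral => //.
  by move=> x _; rewrite lee_fin mulr_ge0 ?expR_ge0 ?gamma_pdf_ge0.
rewrite integral_gamma_pdf.
have c1n0 : c1 != 0 by rewrite gt_eqF.
have pw : forall x, 0 <= x -> h x * gpdf k x = C * (gpdf k (c1^-1 * x) * c1^-1).
  move=> x _; rewrite /h /gpdf.
  rewrite /a; have [n kn] : exists n, k = n.+1 by exists k.-1; rewrite prednK.
  rewrite kn /=.
  have eC : C = expR ((1 - c1) * n.+1%:R) * c1 ^+ n.+1.
    rewrite /C kn; have -> : c1 ^+ n.+1 = expR (n.+1%:R * ln c1) by rewrite expRM_natl lnK // posrE.
    rewrite -expRD; congr expR; ring.
  have e1 : expR (th * (c1 * n.+1%:R - x)) * expR (- x) =
            expR ((1 - c1) * n.+1%:R) * expR (- (c1^-1 * x)).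
    rewrite -!expRD; congr expR; rewrite /th; field; exact: c1n0.
  rewrite eC exprMn exprVn exprS.
  have nf : (n`!%:R : R) != 0 by rewrite pnatr_eq0 -lt0n fact_gt0.
  have cn : c1 ^+ n != 0 by rewrite expf_neq0.
  transitivity (x ^+ n / n`!%:R * (expR (th * (c1 * n.+1%:R - x)) * expR (- x))).
    by field.
  rewrite e1; field.
  by rewrite cn c1n0 nf.
have ge0_of : forall x : R, x \in `[0%R, +oo[%classic -> 0 <= x.
  by move=> x; rewrite inE /= in_itv /= andbT.
under eq_integral => x xin do rewrite (pw x (ge0_of x xin)) EFinM.
rewrite ge0_integralZl_EFin //.
- by rewrite -gpdf_subst ?invr_gt0 // (gamma_norm _ _ _ H) mule1.
- move=> x; rewrite /= in_itv /= andbT => x0; rewrite lee_fin mulr_ge0 ?invr_ge0 ?(ltW c10) //.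
  by apply: gpdf_ge0; rewrite mulr_ge0 ?invr_ge0 ?(ltW c10).
- apply/measurable_EFinP; apply: measurable_funM => //.
  apply: measurable_funTS; apply: measurable_realfun.continuous_measurable_fun => x.
  apply: continuous_comp; last exact: gpdf_cont.
  apply: (@continuousM _ R^o (fun=> c1^-1) id); [exact: cst_continuous | exact: cvg_id].
- by rewrite expR_ge0.
Qed.

Lemma mset_ge {R : realType} {d} {T : measurableType d} (f : T -> R) (c : R) :
  measurable_fun setT f -> measurable [set w | c <= f w].
Proof.
move=> mf; have := mf measurableT `[c, +oo[%classic (measurable_itv _).
rewrite setTI; congr measurable; apply/seteqP; split => w /=; by rewrite in_itv /= andbT.
Qed.

Lemma mset_lt {R : realType} {d} {T : measurableType d} (f : T -> R) (c : R) :
  measurable_fun setT f -> measurable [set w | f w < c].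
Proof.
move=> mf; have := mf measurableT `]-oo, c[%classic (measurable_itv _).
rewrite setTI; congr measurable; apply/seteqP; split => w /=; by rewrite in_itv /=.
Qed.

Lemma mset_le {R : realType} {d} {T : measurableType d} (f : T -> R) (c : R) :
  measurable_fun setT f -> measurable [set w | f w <= c].
Proof.
move=> mf; have := mf measurableT `]-oo, c]%classic (measurable_itv _).
rewrite setTI; congr measurable; apply/seteqP; split => w /=; by rewrite in_itv /=.
Qed.

Theorem proposition4 (R : realType) (d : measure_display) (Omega : measurableType d)
  (P : probability Omega R) (k : nat) (Tk Y : {RV P >-> R})
  (beta K0 : R) :
  (0 < k)%N ->
  gamma_distributed P k Tk ->
  0 < beta -> 0 < K0 ->
  (forall w, 0 <= Y w) ->
  ('E_P[fun w => (expR (beta * Tk w) * Y w)%R] <= K0%:E)%E ->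
  forall c0 c1 : R, 1 < c0 -> 0 < c1 < 1 ->
  ((1 - c0^-1 - expR (- (c1 - 1 - ln c1) * k%:R))%:E
     <= P [set w | (Y w <= c0 * K0 * expR (- beta * c1 * k%:R))%R])%E.
Proof.
move=> k0 HT b0 K00 Y0 HE c0 c1 c01 c1i.
set e := expR (- (c1 - 1 - ln c1) * k%:R).
set c := c0 * K0 * expR (- beta * c1 * k%:R).
pose Z := fun w => expR (beta * Tk w) * Y w.
have mT : measurable_fun setT Tk := measurable_funPT Tk.
have mY : measurable_fun setT Y := measurable_funPT Y.
have mZ : measurable_fun setT Z.
  apply: measurable_funM => //; apply: measurableT_comp => //.
  exact: measurable_funM.
set B := [set w | Y w <= c].
set A1 := [set w | c0 * K0 <= Z w].
set A2 := [set w | Tk w < c1 * k%:R].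
have mB : measurable B := mset_le _ c mY.
have mA1 : measurable A1 := mset_ge _ (c0 * K0) mZ.
have mA2 : measurable A2 := mset_lt _ (c1 * k%:R) mT.
have c0p : 0 < c0 by apply: lt_trans c01.
have sub : ~` B `<=` A1 `|` A2.
  move=> w /= /negP; rewrite -ltNge => Yw.
  case: (ltP (Tk w) (c1 * k%:R)) => Tw; [by right|left].
  rewrite /A1 /= /Z; apply: ltW.
  have e0 : - beta * c1 * k%:R + beta * (c1 * k%:R) = 0 by ring.
  have -> : c0 * K0 = c * expR (beta * (c1 * k%:R)).
    by rewrite /c -mulrA -expRD e0 expR0 mulr1.
  have c0' : 0 < c by rewrite /c !mulr_gt0 ?expR_gt0.
  apply: (@lt_le_trans _ _ (Y w * expR (beta * (c1 * k%:R)))).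
    by rewrite ltr_pM2r ?expR_gt0.
  rewrite mulrC ler_pM2r; last exact: lt_trans Yw.
  by rewrite ler_expR ler_pM2l.
have hA1 : (P A1 <= c0^-1%:E)%E.
  have HE' : (\int[P]_w (Z w)%:E <= K0%:E)%E by move: HE; rewrite unlock.
  have mI : measurable_fun setT (fun w => (\1_A1 w : R)%:E).
    by apply/measurable_EFinP; exact: measurable_indic.
  have M : ((c0 * K0)%:E * P A1 <= K0%:E)%E.
    apply: le_trans HE'.
    have := integral_indic P measurableT mA1; rewrite setIT => <-.
    rewrite -ge0_integralZl_EFin //; try (by rewrite mulr_ge0 // ltW); try (by move=> w _; rewrite lee_fin indicE; case: (_ \in _)).
    apply: ge0_le_integral => //.
    - move=> w _; rewrite -EFinM lee_fin; apply: mulr_ge0; first by rewrite mulr_ge0 // ltW.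
      by rewrite indicE; case: (_ \in _).
    - by apply/measurable_EFinP; apply: measurable_funM => //; exact: measurable_indic.
    - by apply/measurable_EFinP.
    move=> w _; rewrite -EFinM lee_fin indicE.
    case: (boolP (w \in A1)) => h; rewrite ?mulr1 ?mulr0.
      by move: h; rewrite inE.
    by rewrite /Z mulr_ge0 ?expR_ge0.
  have fA := fineK (fin_num_measure P _ mA1).
  move: M; rewrite -fA -EFinM !lee_fin => M.
  have cK : 0 < c0 * K0 by rewrite mulr_gt0.
  rewrite -(ler_pM2l cK); apply: le_trans M _.
  by rewrite -mulrA mulrCA divff ?mulr1 // gt_eqF.
have hA2 : (P A2 <= e%:E)%E := gamma_tail _ _ _ _ k0 HT c1i.
have hBc : (P (~` B) <= c0^-1%:E + e%:E)%E.
  apply: (@le_trans _ _ (P (A1 `|` A2))).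
    by apply: le_measure => //; rewrite inE; [exact: measurableC | exact: measurableU].
  by apply: le_trans (measureU2 P mA1 mA2) _; exact: leeD.
rewrite -[B]setCK probability_setC; last exact: measurableC.
have fB := fineK (fin_num_measure P _ (measurableC mB)).
move: hBc; rewrite -fB -EFinD -EFinB !lee_fin => h.
lra.
Qed.
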